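(* Let $R_1,R_2$ be commutative multiplicative hyperrings with identity having the zero absorbing property, and let $f:R_1\to R_2$ be a good homomorphism. Let $I_1,I_2$ be hyperideals of $R_1,R_2$ respectively. Let $\alpha_1$ be a good endomorphism of $R_1$ and $\alpha_2$ a good endomorphism of $R_2$ with $\alpha_2(f(r))=f(\alpha_1(r))$ for all $r\in R_1$. Then: (1) $f\big(\sqrt[\alpha_1]{I_1}\big)\subseteq\sqrt[\alpha_2]{f(I_1)}$; (2) $\sqrt[\alpha_1]{f^{-1}(I_2)}\subseteq f^{-1}\big(\sqrt[\alpha_2]{I_2}\big)$; (3) if $f$ is an isomorphism, then $f\big(\sqrt[\alpha_1]{I_1}\big)=\sqrt[\alpha_2]{f(I_1)}$.
   Context: A multiplicative hyperring is an abelian group $(R,+)$ with a hyperoperation $\circ:R\times R\to \mathcal P^*(R)$ (nonempty subsets) such that $a\circ(b\circ c)=(a\circ b)\circ c$, $a\circ(b+c)\subseteq a\circ b+a\circ c$, $(b+c)\circ a\subseteq b\circ a+c\circ a$, and $a\circ(-b)=(-a)\circ b=-(a\circ b)$. Products of subsets are unions of elementwise products, and $x^n=x\circ\cdots\circ x$ ($n$ factors). Commutative means $a\circ b=b\circ a$. An identity $1$ satisfies $a\in1\circ a$ for all $a$. $R$ has the zero absorbing property if $0\circ r=r\circ0=\{0\}$ for all $r$. A hyperideal is a nonempty $I$ closed under subtraction with $r\circ x\subseteq I$ for $r\in R$, $x\in I$. Standing assumption: all hyperideals are $\mathbf C$-hyperideals, i.e. for every finite product $A=r_1\circ\cdots\circ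 r_n$, $A\cap I\ne\emptyset$ implies $A\subseteq I$. A good homomorphism $f$ satisfies $f(x+y)=f(x)+f(y)$ and $f(x\circ y)=f(x)\circ f(y)$; a good endomorphism is a good homomorphism $R\to R$; maps are applied to sets elementwise. For a good endomorphism $\alpha$ and subset $J$, the $\alpha$-radical is $\sqrt[\alpha]{J}=\{r:\alpha(r^n)\subseteq J\text{ for some }n\in\mathbb N\}$. *)

(* Defs.v *)
(* the additive group (R,+) is a MathComp zmodType;
   subsets are predicates R -> Prop; a hyperoperation is a ternary
   relation  m a b z  meaning  z \in a o b. *)
From mathcomp Require Import all_boot all_algebra.
Set Implicit Arguments.
Unset Strict Implicit.
Unset Printing Implicit Defensive.
Import GRing.Theory.
Local Open Scope ring_scope.

Definition hset (R : Type) := R -> Prop.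
Definition hyperop (R : Type) := R -> R -> hset R.

Definition hsubset (R : Type) (A B : hset R) : Prop := forall x, A x -> B x.
Definition hseteq (R : Type) (A B : hset R) : Prop := forall x, A x <-> B x.

Definition hprodS (R : Type) (m : hyperop R) (A B : hset R) : hset R :=
  fun z => exists a b, A a /\ B b /\ m a b z.
Definition hsumS (R : zmodType) (A B : hset R) : hset R :=
  fun z => exists a b, A a /\ B b /\ z = a + b.
Definition hoppS (R : zmodType) (A : hset R) : hset R :=
  fun z => exists a, A a /\ z = - a.
Definition hsing (R : Type) (a : R) : hset R := fun z => z = a.

Definition is_mhyperring (R : zmodType) (m : hyperop R) : Prop :=
  [/\ (forall a b, exists z, m a b z),
      (forall a b c, hseteq (hprodS m (hsing a) (m b c)) (hprodS m (m a b) (hsing c))),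
      (forall a b c, hsubset (m a (b + c)) (hsumS (m a b) (m a c))),
      (forall a b c, hsubset (m (b + c) a) (hsumS (m b a) (m c a))) &
      (forall a b, hseteq (m a (- b)) (hoppS (m a b)) /\
                   hseteq (m (- a) b) (hoppS (m a b)))].

Definition hcommutative (R : Type) (m : hyperop R) : Prop :=
  forall a b, hseteq (m a b) (m b a).

Definition has_identity (R : Type) (m : hyperop R) : Prop :=
  exists one : R, forall a, m one a a.

Definition zero_absorbing (R : zmodType) (m : hyperop R) : Prop :=
  forall r, hseteq (m 0 r) (hsing 0) /\ hseteq (m r 0) (hsing 0).

(* finite product r o r1 o ... o rk (left-bracketed; k+1 factors) *)
Fixpoint hprodL (R : Type) (m : hyperop R) (A : hset R) (rs : seq R) : hset R :=
  match rs with
  | [::] => A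
  | r :: rs' => hprodL m (hprodS m A (hsing r)) rs'
  end.
Definition hprod (R : Type) (m : hyperop R) (r : R) (rs : seq R) : hset R :=
  hprodL m (hsing r) rs.

(* x^n = x o ... o x (n factors), meaningful for n >= 1 *)
Definition hpow (R : Type) (m : hyperop R) (x : R) (n : nat) : hset R :=
  hprod m x (nseq n.-1 x).

(* C-hyperideal (standing assumption: all hyperideals are C-hyperideals) *)
Definition is_hyperideal (R : zmodType) (m : hyperop R) (I : hset R) : Prop :=
  [/\ (exists x, I x),
      (forall x y, I x -> I y -> I (x - y)),
      (forall r x, I x -> hsubset (m r x) I) &
      (forall r rs, (exists z, hprod m r rs z /\ I z) -> hsubset (hprod m r rs) I)].

Definition himage (R S : Type) (f : R -> S) (A : hset R) : hset S :=
  fun y => exists x, A x /\ y = f x.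
Definition hpreimage (R S : Type) (f : R -> S) (B : hset S) : hset R :=
  fun x => B (f x).

Definition good_hom (R S : zmodType) (m1 : hyperop R) (m2 : hyperop S)
  (f : R -> S) : Prop :=
  (forall x y, f (x + y) = f x + f y) /\
  (forall x y, hseteq (himage f (m1 x y)) (m2 (f x) (f y))).

Definition good_endo (R : zmodType) (m : hyperop R) (al : R -> R) : Prop :=
  good_hom m m al.

Definition alpha_radical (R : Type) (m : hyperop R) (al : R -> R) (J : hset R)
  : hset R :=
  fun r => exists n : nat, (0 < n)%N /\ hsubset (himage al (hpow m r n)) J.

(* Main.v *)
Require Import Defs.
From mathcomp Require Import all_boot all_algebra.

Lemma hprodL_mono (R : Type) (m : hyperop R) (A B : hset R) rs :
  hsubset A B -> hsubset (hprodL m A rs) (hprodL m B rs).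
Proof.
elim: rs A B => [|r rs IH] A B AB //=.
apply: IH => z [a [b [Aa [Bb mz]]]]; exists a, b; split; auto.
Qed.

Lemma image_hprodL (R1 R2 : zmodType) (m1 : hyperop R1) (m2 : hyperop R2)
  (f : R1 -> R2) (hf : good_hom m1 m2 f) rs (A : hset R1) :
  hseteq (himage f (hprodL m1 A rs)) (hprodL m2 (himage f A) (map f rs)).
Proof.
case: hf => _ hm.
elim: rs A => [|r rs IH] A //=.
move=> z; split.
- move=> H; move: (proj1 (IH _ z) H); apply: hprodL_mono => w.
  move=> [v [[x [y [Ax [Hy mv]]]] ->]].
  rewrite /hsing in Hy; subst y.
  exists (f x), (f r); split; first by exists x.
  split => //; apply/hm; by exists v.
- move=> H; apply: (proj2 (IH _ z)); move: H; apply: hprodL_mono => w [a [b [[x [Ax ->]] [-> mw]]]].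
  have [v [mv ->]] : himage f (m1 x r) w by apply/hm.
  exists v; split => //; exists x, r; split => //.
Qed.

Lemma image_hpow (R1 R2 : zmodType) (m1 : hyperop R1) (m2 : hyperop R2)
  (f : R1 -> R2) (hf : good_hom m1 m2 f) x n :
  hseteq (himage f (hpow m1 x n)) (hpow m2 (f x) n).
Proof.
move=> z; rewrite /hpow /hprod.
have E := @image_hprodL _ _ _ _ _ hf (nseq n.-1 x) (hsing x) z.
rewrite map_nseq in E.
split.
- move/E; apply: hprodL_mono => w [v [-> ->]] //.
- move=> H; apply/E; move: H; apply: hprodL_mono => w ->; by exists x.
Qed.

Theorem mainTheorem15
  (R1 R2 : zmodType) (m1 : hyperop R1) (m2 : hyperop R2)
  (hR1 : is_mhyperring m1) (cR1 : hcommutative m1) (iR1 : has_identity m1)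
  (zR1 : zero_absorbing m1)
  (hR2 : is_mhyperring m2) (cR2 : hcommutative m2) (iR2 : has_identity m2)
  (zR2 : zero_absorbing m2)
  (f : R1 -> R2) (hf : good_hom m1 m2 f)
  (I1 : hset R1) (I2 : hset R2)
  (hI1 : is_hyperideal m1 I1) (hI2 : is_hyperideal m2 I2)
  (al1 : R1 -> R1) (al2 : R2 -> R2)
  (hal1 : good_endo m1 al1) (hal2 : good_endo m2 al2)
  (hcomm : forall r, al2 (f r) = f (al1 r)) :
  [/\ hsubset (himage f (alpha_radical m1 al1 I1))
              (alpha_radical m2 al2 (himage f I1)),
      hsubset (alpha_radical m1 al1 (hpreimage f I2))
              (hpreimage f (alpha_radical m2 al2 I2)) &
      (bijective f ->
         hseteq (himage f (alpha_radical m1 al1 I1))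
                (alpha_radical m2 al2 (himage f I1)))].
Proof.
have P1 : hsubset (himage f (alpha_radical m1 al1 I1))
              (alpha_radical m2 al2 (himage f I1)).
  move=> y [x [[n [n0 H]] ->]]; exists n; split => //.
  move=> z [w [hw ->]].
  have [v [hv ->]] := (proj2 (@image_hpow _ _ _ _ _ hf x n w) hw).
  rewrite hcomm; exists (al1 v); split => //; apply: H; by exists v.
split => //.
- move=> x [n [n0 H]]; exists n; split => //.
  move=> z [w [hw ->]].
  have [v [hv ->]] := (proj2 (@image_hpow _ _ _ _ _ hf x n w) hw).
  rewrite hcomm; apply: (H (al1 v)); by exists v.
- case=> g fg gf y; split; first by apply: P1.
  move=> [n [n0 H]]; exists (g y); split; last by rewrite gf.
  exists n; split => //.
  move=> z [v [hv ->]].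
  have : himage f I1 (al2 (f v)).
    apply: H; exists (f v); split => //.
    rewrite -[y]gf; apply/(@image_hpow _ _ _ _ _ hf); by exists v.
  move=> [w [Iw E]]; rewrite hcomm in E.
  by rewrite -(fg (al1 v)) E fg.
Qed.
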